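(* Let $P(\lambda)=\begin{bmatrix} A(\lambda) & B(\lambda)\\ -C(\lambda) & D(\lambda)\end{bmatrix}$ be a polynomial system matrix of a rational matrix $G(\lambda)\in\mathbb F(\lambda)^{p\times m}$, with $A(\lambda)\in\mathbb F[\lambda]^{n\times n}$. (a) If $A(\lambda)$ and $C(\lambda)$ are right coprime, $A(\lambda)^{-1}B(\lambda)$ is proper and $\begin{bmatrix} H_1(\lambda)\\ H_2(\lambda)\end{bmatrix}\in\mathbb F[\lambda]^{(n+m)\times l}$ is a right minimal basis of $P(\lambda)$, then $H_2(\lambda)$ is a right minimal basis of $G(\lambda)$ and $H_1(\lambda)=-A(\lambda)^{-1}B(\lambda)H_2(\lambda)$. Moreover, the right minimal indices of $P(\lambda)$ and $G(\lambda)$ are the same. (b) If $A(\lambda)$ and $B(\lambda)$ are left coprime, $C(\lambda)A(\lambda)^{-1}$ is proper and $\begin{bmatrix} H_1(\lambda)\\ H_2(\lambda)\end{bmatrix}\in\mathbb F[\lambda]^{(n+p)\times q}$ is a left minimal basis of $P(\lambda)$, then $H_2(\lambda)$ is a left minimal basis of $G(\lambda)$ and $H_1(\lambda)=(C(\lambda)A(\lambda)^{-1})^TH_2(\lambda)$. Moreover, the left minimal indices of $P(\lambda)$ and $G(\lambda)$ are the same.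
   Context: $\mathbb F$ is an arbitrary field, $\overline{\mathbb F}$ its algebraic closure. A polynomial system matrix of $G(\lambda)\in\mathbb F(\lambda)^{p\times m}$ is a polynomial matrix $P(\lambda)=\begin{bmatrix} A(\lambda) & B(\lambda)\\ -C(\lambda) & D(\lambda)\end{bmatrix}$ with $A(\lambda)\in\mathbb F[\lambda]^{n\times n}$ regular, $B\in\mathbb F[\lambda]^{n\times m}$, $C\in\mathbb F[\lambda]^{p\times n}$, $D\in\mathbb F[\lambda]^{p\times m}$, and $G=D+CA^{-1}B$. Polynomial matrices $A\in\mathbb F[\lambda]^{n\times n}$, $C\in\mathbb F[\lambda]^{p\times n}$ are right coprime if every common right divisor is unimodular (equivalently $\begin{bmatrix}A(\lambda_0)\\ C(\lambda_0)\end{bmatrix}$ has full column rank for all $\lambda_0\in\overline{\mathbb F}$); $A,B$ are left coprime if $A^T,B^T$ are right coprime. A rational matrix is proper if every entry has numerator degree at most denominator degree. For a subspace $\mathcal V\subseteq\mathbb F(\lambda)^k$, the order of a polynomial basis is the sum of the degrees of its vectors; a minimal basis is a polynomial basis of least order; the minimal indices of $\mathcal V$ are the degrees of the vectors of a minimal basis (well defined). A polynomial matrix is a right (resp. left) minimal basis of a rational matrix $G$ if its columns form a minimal basis of $\mathcal N_r(G)=\{x: Gx=0\}$ (resp. $\mathcal N_\ell(G)=\{x: x^TG=0\}$); the right (left) minimal indices of $G$ are the minimal indices of $\mathcal N_r(G)$ ($\mathcal N_\ell(G)$). *)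

(* Defs.v *)
From HB Require Import structures.
From mathcomp Require Import all_boot all_order all_algebra fraction.
Set Implicit Arguments. Unset Strict Implicit. Unset Printing Implicit Defensive.
Import Order.TTheory GRing.Theory Num.Theory.
Local Open Scope ring_scope.

Notation ratF F := {fraction {poly F}}.

Definition tofracP (F : fieldType) (x : {poly F}) : ratF F :=
  @FracField.tofrac _ x.

Definition toK (F : fieldType) (m n : nat) (M : 'M[{poly F}]_(m, n))
  : 'M[ratF F]_(m, n) := map_mx (@tofracP F) M.

Definition regular_pmx (F : fieldType) (n : nat) (A : 'M[{poly F}]_n) :=
  \det A != 0.

Definition unimodular (F : fieldType) (n : nat) (U : 'M[{poly F}]_n) :=
  U \in unitmx.

Definition right_coprime (F : fieldType) (n p : nat)
  (A : 'M[{poly F}]_n) (C : 'M[{poly F}]_(p, n)) :=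
  forall (R : 'M[{poly F}]_n) (A' : 'M[{poly F}]_n) (C' : 'M[{poly F}]_(p, n)),
    A = A' *m R -> C = C' *m R -> unimodular R.

Definition left_coprime (F : fieldType) (n m : nat)
  (A : 'M[{poly F}]_n) (B : 'M[{poly F}]_(n, m)) :=
  right_coprime A^T B^T.

Definition proper_rat (F : fieldType) (x : ratF F) :=
  exists (a b : {poly F}), b != 0 /\ x = tofracP a / tofracP b /\ (size a <= size b)%N.

Definition proper_mx (F : fieldType) (m n : nat) (M : 'M[ratF F]_(m, n)) :=
  forall i j, proper_rat (M i j).

Definition vdeg (F : fieldType) (k : nat) (v : 'cV[{poly F}]_k) : nat :=
  \max_(i < k) (size (v i ord0)).-1.

Definition col_degs (F : fieldType) (k l : nat) (H : 'M[{poly F}]_(k, l))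
  : seq nat := [seq vdeg (col j H) | j <- enum 'I_l].

Definition order_basis (F : fieldType) (k l : nat) (H : 'M[{poly F}]_(k, l))
  : nat := \sum_(j < l) vdeg (col j H).

Definition poly_basis (F : fieldType) (k : nat) (V : 'cV[ratF F]_k -> Prop)
  (l : nat) (H : 'M[{poly F}]_(k, l)) :=
  \rank (toK H) = l /\
  (forall x : 'cV[ratF F]_k, V x <-> exists y : 'cV[ratF F]_l, x = toK H *m y).

Definition minimal_basis (F : fieldType) (k : nat) (V : 'cV[ratF F]_k -> Prop)
  (l : nat) (H : 'M[{poly F}]_(k, l)) :=
  poly_basis V H /\
  forall (l' : nat) (H' : 'M[{poly F}]_(k, l')),
    poly_basis V H' -> (order_basis H <= order_basis H')%N.

Definition null_r (F : fieldType) (p k : nat) (G : 'M[ratF F]_(p, k))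
  : 'cV[ratF F]_k -> Prop := fun x => G *m x = 0.
Definition null_l (F : fieldType) (k m : nat) (G : 'M[ratF F]_(k, m))
  : 'cV[ratF F]_k -> Prop := fun x => x^T *m G = 0.

Definition right_minimal_basis (F : fieldType) (p k l : nat)
  (G : 'M[ratF F]_(p, k)) (H : 'M[{poly F}]_(k, l)) :=
  minimal_basis (null_r G) H.
Definition left_minimal_basis (F : fieldType) (k m l : nat)
  (G : 'M[ratF F]_(k, m)) (H : 'M[{poly F}]_(k, l)) :=
  minimal_basis (null_l G) H.

Definition same_right_min_indices (F : fieldType) (p1 k1 p2 k2 : nat)
  (G1 : 'M[ratF F]_(p1, k1)) (G2 : 'M[ratF F]_(p2, k2)) :=
  forall (l1 l2 : nat) (M1 : 'M[{poly F}]_(k1, l1)) (M2 : 'M[{poly F}]_(k2, l2)),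
    right_minimal_basis G1 M1 -> right_minimal_basis G2 M2 ->
    perm_eq (col_degs M1) (col_degs M2).

Definition same_left_min_indices (F : fieldType) (k1 m1 k2 m2 : nat)
  (G1 : 'M[ratF F]_(k1, m1)) (G2 : 'M[ratF F]_(k2, m2)) :=
  forall (l1 l2 : nat) (M1 : 'M[{poly F}]_(k1, l1)) (M2 : 'M[{poly F}]_(k2, l2)),
    left_minimal_basis G1 M1 -> left_minimal_basis G2 M2 ->
    perm_eq (col_degs M1) (col_degs M2).

Definition sys_mx (F : fieldType) (n m p : nat) (A : 'M[{poly F}]_n)
  (B : 'M[{poly F}]_(n, m)) (C : 'M[{poly F}]_(p, n)) (D : 'M[{poly F}]_(p, m))
  : 'M[{poly F}]_(n + p, n + m) := block_mx A B (- C) D.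

Definition is_system_matrix_of (F : fieldType) (n m p : nat) (A : 'M[{poly F}]_n)
  (B : 'M[{poly F}]_(n, m)) (C : 'M[{poly F}]_(p, n)) (D : 'M[{poly F}]_(p, m))
  (G : 'M[ratF F]_(p, m)) :=
  regular_pmx A /\ G = toK D + toK C *m invmx (toK A) *m toK B.

(* Main.v *)
Require Import Defs.
From HB Require Import structures.
From mathcomp Require Import all_boot all_order all_algebra fraction.
From mathcomp Require Import zify ring.
From Stdlib Require Import Classical.
Set Implicit Arguments. Unset Strict Implicit. Unset Printing Implicit Defensive.
Import Order.TTheory GRing.Theory Num.Theory.
Local Open Scope ring_scope.

Section L1.
Variable F : fieldType.
Local Notation P := {poly F}.

Lemma irr_factor (q : P) : (1 < size q)%N ->
  exists pi : P, [/\ pi %| q, (1 < size pi)%N &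
    forall d : P, d %| pi -> (1 < size d)%N -> (size pi <= size d)%N].
Proof.
move: {2}(size q) (leqnn (size q)) => N; elim: N q => [|N IH] q hN hq.
  by move: hN; rewrite leqn0 => /eqP h; rewrite h in hq.
destruct (classic (exists d : P, d %| q /\ (1 < size d)%N /\ (size d < size q)%N))
  as [[d [dq [d1 d2]]]|nd].
  have hd : (size d <= N)%N by lia.
  have [pi [h1 h2 h3]] := IH d hd d1.
  by exists pi; split=> //; apply: dvdp_trans dq.
exists q; split=> // d dq d1.
have q0 : q != 0 by rewrite -size_poly_gt0 (ltn_trans _ hq).
rewrite leqNgt; apply/negP => lt; apply: nd; exists d; split=> //.
Qed.

Lemma irr_coprime (pi z : P) : (1 < size pi)%N ->
  (forall d : P, d %| pi -> (1 < size d)%N -> (size pi <= size d)%N) ->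
  ~~ (pi %| z) -> coprimep pi z.
Proof.
move=> p1 pmin npz; rewrite /coprimep.
have pi0 : pi != 0 by rewrite -size_poly_gt0 (ltn_trans _ p1).
have g0 : gcdp pi z != 0 by rewrite gcdp_eq0 negb_and pi0.
case: ltngtP => // hg.
  by move: hg; rewrite ltnS leqn0 size_poly_eq0 (negbTE g0).
have h1 := pmin _ (dvdp_gcdl pi z) hg.
have h2 := dvdp_leq pi0 (dvdp_gcdl pi z).
have : size (gcdp pi z) == size pi by rewrite eqn_leq h1 h2.
rewrite dvdp_size_eqp ?dvdp_gcdl // => e.
by move: npz; rewrite -(eqp_dvdl _ e) dvdp_gcdr.
Qed.

Lemma fac k n (X : 'M[P]_(k,n)) (pi : P) (y : 'cV_n) (w : 'cV_k) (i0 : 'I_n) :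
  y i0 0 = 1 -> X *m y = pi *: w ->
  X = (X + (w - X *m delta_mx i0 0) *m (delta_mx i0 0)^T) *m
      (1%:M + (pi *: delta_mx i0 0 - y) *m (delta_mx i0 0)^T).
Proof.
move=> y1 Xy.
set e := delta_mx i0 0; set E := e^T.
have Ee : E *m e = 1%:M.
  by rewrite /E /e trmx_delta mul_delta_mx; apply/matrixP=> i j; rewrite !ord1 !mxE.
have Ey : E *m y = 1%:M.
  by rewrite /E /e trmx_delta -rowE; apply/matrixP=> i j; rewrite !ord1 !mxE y1.
set b := w - X *m e.
have Ea : E *m (pi *: e - y) = pi%:M - 1%:M.
  by rewrite mulmxBr -scalemxAr Ee Ey scalemx1.
have Xa : X *m (pi *: e - y) = - (pi *: b).
  by rewrite mulmxBr -scalemxAr Xy /b scalerBr opprB.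
clearbody b E.
rewrite mulmxDr mulmx1 mulmxA mulmxDl Xa -(mulmxA b) Ea.
rewrite mulmxBr mulmx1 mul_mx_scalar.
rewrite -addrA -[X in X = _]addr0; congr (_ + _).
by rewrite addrA addNr add0r mulNmx subrr.
Qed.

Lemma divmx_ex k l (X : 'M[P]_(k,l)) (pi : P) : (forall i j, pi %| X i j) ->
  X = pi *: map_mx (fun a => a %/ pi) X.
Proof. by move=> h; apply/matrixP=> i j; rewrite !mxE divpKC. Qed.

Lemma bad n p (A : 'M[P]_n) (C : 'M[P]_(p,n)) (pi : P) (z : 'cV_n) (i0 : 'I_n) :
  right_coprime A C -> (1 < size pi)%N ->
  (forall d : P, d %| pi -> (1 < size d)%N -> (size pi <= size d)%N) ->
  (forall i, pi %| (A *m z) i 0) -> (forall i, pi %| (C *m z) i 0) ->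
  ~~ (pi %| z i0 0) -> False.
Proof.
move=> rc p1 pmin hA hC nz.
have /Bezout_eq1_coprimepP [[u1 u2] /= hb] := irr_coprime p1 pmin nz.
set e : 'cV[P]_n := delta_mx i0 0.
set y := u2 *: z + (1 - u2 * z i0 0) *: e.
have y1 : y i0 0 = 1.
  by rewrite /y !mxE eqxx /= mulr1 addrC subrK.
have hX k (X : 'M[P]_(k,n)) : (forall i, pi %| (X *m z) i 0) ->
    forall i j, pi %| (X *m y) i j.
  move=> hz i j; rewrite (ord1 j) /y mulmxDr -!scalemxAr !mxE.
  rewrite -hb addrK; apply: dvdp_add.
    by apply: dvdp_mull; move: (hz i); rewrite mxE.
  by apply: dvdp_mulr; apply: dvdp_mull; apply: dvdpp.
have := fac y1 (divmx_ex (hX _ _ hA)).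
have := fac y1 (divmx_ex (hX _ _ hC)).
set R := (1%:M + _) => eC eA.
have uR : R \in unitmx := rc _ _ _ eA eC.
have Ry : R *m y = pi *: e.
  rewrite /R mulmxDl mul1mx -mulmxA.
  have -> : (delta_mx i0 0)^T *m y = 1%:M.
    by rewrite trmx_delta -rowE; apply/matrixP=> i j; rewrite !ord1 !mxE eqxx /= mulr1 addrC subrK.
  by rewrite mulmx1 addrC subrK.
have : y = pi *: (invmx R *m e).
  by rewrite scalemxAr -Ry mulmxA mulVmx // mul1mx.
move/(congr1 (fun M : 'cV_n => M i0 0)); rewrite y1 mxE => h1.
have : pi %| 1 by rewrite h1 dvdp_mulr.
by rewrite dvdp1 => /eqP h2; rewrite h2 in p1.
Qed.

Lemma descent n p (A : 'M[P]_n) (C : 'M[P]_(p,n)) : right_coprime A C ->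
  forall N k (Z : 'M[P]_(n,k)) (q : P), (size q <= N)%N -> q != 0 ->
  (forall i j, q %| (A *m Z) i j) -> (forall i j, q %| (C *m Z) i j) ->
  forall i j, q %| Z i j.
Proof.
move=> rc; elim=> [|N IH] k Z q hN q0 hA hC.
  by move: hN; rewrite leqn0 size_poly_eq0 (negbTE q0).
have [q1|q1] := leqP (size q) 1.
  have /eqP qs : size q == 1.
    by rewrite eqn_leq q1 size_poly_gt0.
  move=> i j; have : q %= 1 by rewrite -size_poly_eq1 qs.
  by move/eqp_dvdl => ->; rewrite dvd1p.
have [pi [piq p1 pmin]] := irr_factor q1.
have pi0 : pi != 0 by rewrite -size_poly_gt0 (ltn_trans _ p1).
case: (boolP [forall i, forall j, pi %| Z i j]) => [/forallP hZ|].
  have eZ := divmx_ex (fun i j => (forallP (hZ i)) j).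
  set Z' := map_mx _ Z in eZ.
  set q' := q %/ pi.
  have eq : q = pi * q' by rewrite /q' divpKC.
  have q'0 : q' != 0 by apply: contraNneq q0 => h; rewrite eq h mulr0.
  have sq : (size q' <= N)%N.
    rewrite /q' size_divp //; move: hN p1; case: (size pi) => [|s] //= hN p1.
    apply: leq_trans (leq_sub2r s hN) _; lia.
  have hA' i j : q' %| (A *m Z') i j.
    by rewrite -(dvdp_mul2l _ _ pi0) -eq; move: (hA i j); rewrite eZ -scalemxAr mxE.
  have hC' i j : q' %| (C *m Z') i j.
    by rewrite -(dvdp_mul2l _ _ pi0) -eq; move: (hC i j); rewrite eZ -scalemxAr mxE.
  move=> i j; rewrite eZ mxE eq dvdp_mul2l //.
  exact: IH.
case/forallPn => i0 /forallPn [j0 nz].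
exfalso; apply: (@bad n p A C pi (col j0 Z) i0 rc p1 pmin).
- move=> i; rewrite colE mulmxA -colE mxE.
  exact: dvdp_trans piq (hA i j0).
- move=> i; rewrite colE mulmxA -colE mxE.
  exact: dvdp_trans piq (hC i j0).
- by rewrite mxE.
Qed.
End L1.

Section L2.
Variable F : fieldType.
Local Notation P := {poly F}.
Local Notation K := {fraction P}.
Local Notation tf := (@FracField.tofrac P).

Lemma toKE k l (M : 'M[P]_(k,l)) : toK M = map_mx tf M.
Proof. by []. Qed.

Lemma toKM k l r (M : 'M[P]_(k,l)) (N : 'M[P]_(l,r)) : toK (M *m N) = toK M *m toK N.
Proof. by rewrite !toKE map_mxM. Qed.
Lemma toKZ k l (a : P) (M : 'M[P]_(k,l)) : toK (a *: M) = tf a *: toK M.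
Proof. by rewrite !toKE map_mxZ. Qed.
Lemma toKN k l (M : 'M[P]_(k,l)) : toK (- M) = - toK M.
Proof. by rewrite !toKE map_mxN. Qed.
Lemma toKD k l (M N : 'M[P]_(k,l)) : toK (M + N) = toK M + toK N.
Proof. by rewrite !toKE map_mxD. Qed.
Lemma toKB k l (M N : 'M[P]_(k,l)) : toK (M - N) = toK M - toK N.
Proof. by rewrite !toKE map_mxB. Qed.
Lemma toK1 k : toK (1%:M : 'M[P]_k) = 1%:M.
Proof. by rewrite !toKE map_mx1. Qed.
Lemma toK0 k l : toK (0 : 'M[P]_(k,l)) = 0.
Proof. by rewrite !toKE map_mx0. Qed.
Lemma toKtr k l (M : 'M[P]_(k,l)) : toK M^T = (toK M)^T.
Proof. by rewrite !toKE map_trmx. Qed.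
Lemma toK_col_mx k1 k2 l (M : 'M[P]_(k1,l)) (N : 'M[P]_(k2,l)) :
  toK (col_mx M N) = col_mx (toK M) (toK N).
Proof. by rewrite !toKE map_col_mx. Qed.
Lemma toK_usub k1 k2 l (M : 'M[P]_(k1 + k2,l)) : toK (usubmx M) = usubmx (toK M).
Proof. by rewrite !toKE map_usubmx. Qed.
Lemma toK_dsub k1 k2 l (M : 'M[P]_(k1 + k2,l)) : toK (dsubmx M) = dsubmx (toK M).
Proof. by rewrite !toKE map_dsubmx. Qed.
Lemma toK_block n1 n2 m1 m2 (A : 'M[P]_(n1,m1)) (B : 'M[P]_(n1,m2))
  (C : 'M[P]_(n2,m1)) (D : 'M[P]_(n2,m2)) :
  toK (block_mx A B C D) = block_mx (toK A) (toK B) (toK C) (toK D).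
Proof. by rewrite !toKE map_block_mx. Qed.
Lemma toK_delta k l (i : 'I_k) (j : 'I_l) : toK (delta_mx i j : 'M[P]_(k,l)) = delta_mx i j.
Proof. by rewrite !toKE map_delta_mx. Qed.
Lemma toK_col k l j (M : 'M[P]_(k,l)) : toK (col j M) = col j (toK M).
Proof. by apply/matrixP=> a b; rewrite !mxE. Qed.
Lemma toKE2 k l (M : 'M[P]_(k,l)) i j : toK M i j = tf (M i j).
Proof. by rewrite mxE. Qed.

Lemma tf_eq0 (x : P) : (tf x == 0) = (x == 0).
Proof. exact: tofrac_eq0. Qed.

Lemma toK_inj k l : injective (@toK F k l).
Proof.
move=> M N /matrixP h; apply/matrixP=> i j.
by move: (h i j); rewrite !mxE => /eqP; rewrite tofrac_eq => /eqP.
Qed.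

Lemma invK n (A : 'M[P]_n) : \det A != 0 ->
  invmx (toK A) = (tf (\det A))^-1 *: toK (\adj A).
Proof.
move=> dA; rewrite /invmx !toKE.
have -> : (map_mx tf A) \in unitmx by rewrite unitmxE det_map_mx unitfE tf_eq0.
by rewrite det_map_mx map_mx_adj.
Qed.

Lemma coprime_poly n m p (A : 'M[P]_n) (B : 'M[P]_(n,m)) (C : 'M[P]_(p,n))
  (D : 'M[P]_(p,m)) l (Kb : 'M[P]_(m,l)) :
  right_coprime A C -> \det A != 0 ->
  (toK D + toK C *m invmx (toK A) *m toK B) *m toK Kb = 0 ->
  exists K1 : 'M[P]_(n,l), toK K1 = - (invmx (toK A) *m toK B *m toK Kb).
Proof.
move=> rc dA hG.
set a := \det A.
have a0 : tf a != 0 by rewrite tf_eq0.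
set Z := - (\adj A *m B *m Kb).
have tZ : toK Z = tf a *: - (invmx (toK A) *m toK B *m toK Kb).
  rewrite invK // -!scalemxAl scalerN scalerA mulfV // scale1r /Z.
  by rewrite toKN !toKM.
have hA i j : a %| (A *m Z) i j.
  rewrite /Z mulmxN !mulmxA mul_mx_adj mul_scalar_mx -scalemxAl.
  by rewrite mxE dvdpNr mxE dvdp_mulr.
have eC : C *m Z = a *: (D *m Kb).
  apply: toK_inj; rewrite toKM tZ -scalemxAr toKZ toKM; congr (_ *: _).
  move: hG; rewrite mulmxDl mulmxN => /eqP; rewrite addr_eq0 => /eqP ->.
  by rewrite !mulmxA.
have hC i j : a %| (C *m Z) i j by rewrite eC mxE dvdp_mulr.
have hd := descent rc (leqnn (size a)) dA hA hC.
have eZ := divmx_ex hd.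
exists (map_mx (fun x => x %/ a) Z).
by apply: (scalerI a0); rewrite -tZ {2}eZ toKZ.
Qed.
End L2.

Lemma fracadd (K : fieldType) (u v w t z : K) : v != 0 -> w != 0 ->
  u / v * z + t / w = (u * z * w + t * v) / (v * w).
Proof. by move=> hv hw; field; rewrite hv hw. Qed.

Section L3.
Variable F : fieldType.
Local Notation P := {poly F}.
Local Notation K := {fraction P}.
Local Notation tf := (@FracField.tofrac P).

Lemma key (a' b' h N b : P) : b' != 0 -> b != 0 ->
  tofracP a' / tofracP b' * tofracP h + tofracP N / tofracP b =
  tofracP (a' * h * b + N * b') / tofracP (b' * b).
Proof.
move=> h1 h2; rewrite /tofracP tofracD !tofracM; apply: fracadd; by rewrite tofrac_eq0.
Qed.

Lemma proper_sum (I : Type) (S : nat) (r : seq I) (a : I -> K) (h : I -> P) :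
  (forall j, proper_rat (a j)) -> (forall j, (size (h j) <= S)%N) ->
  exists N b : P, [/\ b != 0, \sum_(j <- r) a j * tf (h j) = tf N / tf b &
     (size N + 1 <= size b + S)%N].
Proof.
move=> pa hS; elim: r => [|j r [N [b [b0 eN sN]]]].
  exists 0, 1; rewrite big_nil tofrac0 mul0r size_poly0 size_poly1; split=> //.
  exact: oner_neq0.
have [a' [b' [b'0 [ea sa]]]] := pa j.
exists (a' * h j * b + N * b'), (b' * b); split.
- by rewrite mulf_neq0.
- by rewrite big_cons eN ea key.
- rewrite size_mul //.
  have s1 := size_polyMleq (a' * h j) b.
  have s2 := size_polyMleq a' (h j).
  have s3 := size_polyMleq N b'.
  have s4 := size_polyD (a' * h j * b) (N * b').
  have hb : (0 < size b)%N by rewrite size_poly_gt0.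
  have hb' : (0 < size b')%N by rewrite size_poly_gt0.
  have := hS j.
  move: s1 s2 s3 s4 hb hb' sN sa; rewrite -!subn1.
  move: (size (a' * h j * b + N * b')) (size (a' * h j * b)) (size (a' * h j))
    (size (N * b')) (size a') (size b') (size b) (size N) (size (h j)).
  move=> x1 x2 x3 x4 x5 x6 x7 x8 x9 h1 h2 h3; rewrite leq_max => /orP [] h4; lia.
Qed.

Lemma proper_col n m (X : 'M[K]_(n,m)) (x : 'cV[P]_n) (h : 'cV[P]_m) :
  proper_mx X -> toK x = X *m toK h -> (vdeg x <= vdeg h)%N.
Proof.
move=> pX ex; apply/bigmax_leqP => i _.
have hS j : (size (h j ord0) <= (vdeg h).+1)%N.
  have : ((size (h j ord0)).-1 <= vdeg h)%N by apply: (@leq_bigmax_cond _ _ _ j).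
  by case: (size _).
have [N [b [b0 eN sN]]] := proper_sum (index_enum 'I_m) (fun j => pX i j) hS.
move/matrixP: ex => /(_ i 0); rewrite !mxE.
under eq_bigr do rewrite mxE.
rewrite eN => e1.
have : tf (x i 0 * b) = tf N.
  rewrite tofracM; rewrite /tofracP in e1; rewrite e1 mulfVK //; by rewrite tofrac_eq0.
move/eqP; rewrite tofrac_eq => /eqP eNx.
have [->|x0] := eqVneq (x i 0) 0; first by rewrite size_poly0.
move: sN; rewrite -eNx size_mul //.
move: (size (x i 0)) (size b) (size_poly_gt0 b) => u v; rewrite b0 => v0.
case: u => //= u; lia.
Qed.
End L3.

Section L4.
Variable F : fieldType.
Local Notation P := {poly F}.
Local Notation K := {fraction P}.
Local Notation tf := (@FracField.tofrac P).

Lemma rowE1 l (y : 'cV[K]_l) (j : 'I_l) : (delta_mx j 0)^T *m y = (y j 0)%:M.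
Proof. by rewrite trmx_delta -rowE; apply/matrixP=> a b; rewrite !ord1 !mxE eqxx. Qed.

Lemma repl k l (V : 'cV[K]_k -> Prop) (H : 'M[P]_(k,l)) :
  minimal_basis V H -> forall (j : 'I_l) (w : 'cV[P]_k) (y : 'cV[K]_l),
  y j 0 != 0 -> toK w = toK H *m y -> (vdeg (col j H) <= vdeg w)%N.
Proof.
move=> [[rk sp] mn] j w y yj ew.
set e : 'cV[P]_l := delta_mx j 0.
set eK : 'cV[K]_l := delta_mx j 0.
set H' := H + (w - H *m e) *m e^T.
set a := y - eK.
set M := a *m eK^T.
set c := (y j 0)^-1.
have tH' : toK H' = toK H *m (1%:M + M).
  rewrite /H' toKD toKM toKB toKM toKtr toK_delta ew -/eK.
  by rewrite mulmxDr mulmx1 /M /a mulmxA mulmxBr.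
have MM : M *m M = (y j 0 - 1) *: M.
  rewrite /M mulmxA -(mulmxA a) /a mulmxBr rowE1.
  have -> : eK^T *m eK = 1%:M.
    by rewrite /eK rowE1 mxE eqxx.
  by rewrite -(raddfB (@scalar_mx _ 1)) mul_mx_scalar scalemxAl.
have EE : (1%:M + M) *m (1%:M - c *: M) = 1%:M.
  rewrite mulmxDl mul1mx mulmxBr mulmx1 -scalemxAr MM scalerA.
  rewrite -addrA -[X in _ = X]addr0; congr (_ + _).
  rewrite -{2}(scale1r M) -scalerBl -scaleNr -scalerDl.
  have -> : - c + (1 - c * (y j 0 - 1)) = 0.
    by rewrite mulrBr mulr1 /c mulVf // subKr addNr.
  by rewrite scale0r.
have tH : toK H = toK H' *m (1%:M - c *: M).
  by rewrite tH' -mulmxA EE mulmx1.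
have pb : poly_basis V H'.
  split.
    apply/eqP; rewrite eqn_leq rank_leq_col /= -{1}rk tH.
    exact: mxrankM_maxl.
  move=> x; rewrite sp; split=> [[z ->]|[z ->]].
    by exists ((1%:M - c *: M) *m z); rewrite mulmxA -tH.
  by exists ((1%:M + M) *m z); rewrite mulmxA -tH'.
have := mn _ _ pb.
have cH' (d : 'I_l) : col d H' = if d == j then w else col d H.
  have He : H *m e = col j H by rewrite [RHS]colE.
  apply/matrixP=> i b; rewrite (ord1 b) !mxE big_ord1 He !mxE eqxx /=.
  rewrite andbT.
  case: (eqVneq d j) => [->|dj]; first by rewrite mulr1 addrC subrK.
  by rewrite mulr0 addr0 mxE.
rewrite /order_basis (bigD1 j) //= [X in (_ <= X)%N](bigD1 j) //= cH' eqxx.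
have -> : (\sum_(d < l | d != j) vdeg (col d H') = \sum_(d < l | d != j) vdeg (col d H))%N.
  by apply: eq_bigr => d /negbTE dj; rewrite cH' dj.
by rewrite leq_add2r.
Qed.
End L4.

Section L5.
Variable F : fieldType.
Local Notation P := {poly F}.
Local Notation K := {fraction P}.
Local Notation tf := (@FracField.tofrac P).

Lemma repl_all k l (V : 'cV[K]_k -> Prop) (H : 'M[P]_(k,l)) :
  minimal_basis V H -> forall (c : 'I_l) (w : 'cV[P]_k) (y : 'cV[K]_l),
  y c 0 != 0 -> toK w = toK H *m y -> (vdeg (col c H) <= vdeg w)%N.
Proof.
move=> mb c w y yc ew.
case: (@arg_maxnP _ c (fun j => y j 0 != 0) (fun j => vdeg (col j H)) yc) => j yj jmax.
exact: leq_trans (jmax c yc) (repl mb yj ew).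
Qed.

Definition sel l (S : {pred 'I_l}) : 'M[K]_(l, #|S|) :=
  \matrix_(i, a) ((i == enum_val a)%:R).

Lemma selR r l (S : {pred 'I_l}) (M : 'M[K]_(r,l)) i a :
  (M *m sel S) i a = M i (enum_val a).
Proof.
rewrite mxE (bigD1 (enum_val a)) //= big1 ?addr0; first by rewrite mxE eqxx mulr1.
by move=> b /negbTE nb; rewrite mxE nb mulr0.
Qed.

Lemma selL r l (S : {pred 'I_l}) (M : 'M[K]_(l,r)) a t :
  ((sel S)^T *m M) a t = M (enum_val a) t.
Proof.
rewrite mxE (bigD1 (enum_val a)) //= big1 ?addr0; first by rewrite !mxE eqxx mul1r.
by move=> b /negbTE nb; rewrite !mxE nb mul0r.
Qed.

Lemma sel_rank l (S : {pred 'I_l}) : \rank (sel S) = #|S|.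
Proof.
apply/eqP; rewrite eqn_leq rank_leq_col /=.
have e : (sel S)^T *m sel S = 1%:M.
  apply/matrixP=> a b; rewrite selL !mxE (inj_eq (@enum_val_inj _ _)).
  by rewrite eq_sym.
by rewrite -{1}(mxrank1 K #|S|) -e mxrankM_maxr.
Qed.

Lemma count_le k l1 l2 (V : 'cV[K]_k -> Prop) (H1 : 'M[P]_(k,l1)) (H2 : 'M[P]_(k,l2)) s :
  minimal_basis V H1 -> minimal_basis V H2 ->
  (#|[pred t | vdeg (col t H2) <= s]| <= #|[pred c | vdeg (col c H1) <= s]|)%N.
Proof.
move=> mb1 mb2; have [[rk1 sp1] _] := mb1; have [[rk2 sp2] _] := mb2.
set T := [pred t | _]; set S := [pred c | _].
have hy t : exists y : 'cV[K]_l1, toK (col t H2) = toK H1 *m y.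
  have : V (toK (col t H2)) by apply/sp2; exists (delta_mx t 0); rewrite toK_col colE.
  by move/sp1 => [y ->]; exists y.
have [Y hY] := fin_all_exists hy.
set Ym : 'M[K]_(l1,l2) := \matrix_(i, t) Y t i 0.
have eH : toK H2 = toK H1 *m Ym.
  apply/matrixP=> i t; move/matrixP: (hY t) => /(_ i 0).
  by rewrite !mxE => ->; apply: eq_bigr => c _; rewrite !mxE.
have supp c t : Ym c t != 0 -> t \in T -> c \in S.
  rewrite /Ym mxE => yc; rewrite !inE => ht.
  exact: leq_trans (repl_all mb1 yc (hY t)) ht.
have eY : Ym *m sel T = sel S *m ((sel S)^T *m Ym *m sel T).
  apply/matrixP=> i a; rewrite selR.
  case: (boolP (i \in S)) => iS.
    rewrite [RHS]mxE (bigD1 (enum_rank_in iS i)) //= big1 ?addr0.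
      by rewrite [sel S _ _]mxE enum_rankK_in // eqxx mul1r selR selL enum_rankK_in.
    move=> b nb; rewrite mxE; case: eqP => [ib|]; last by rewrite mul0r.
    have h : enum_val (enum_rank_in iS i) = enum_val b by rewrite enum_rankK_in.
    by have h2 := enum_val_inj h; rewrite h2 eqxx in nb.
  rewrite [RHS]mxE big1; last first.
    move=> b _; rewrite mxE; case: eqP => [ib|]; last by rewrite mul0r.
    by move: iS; rewrite ib enum_valP.
  apply/eqP; apply: contraR iS => h; apply: supp h (enum_valP a).
have r1 : \rank (toK H2 *m sel T) = #|T|.
  rewrite -mxrank_tr trmx_mul mxrankMfree ?mxrank_tr ?sel_rank //.
  by rewrite /row_free mxrank_tr rk2.
rewrite -r1 eH -mulmxA eY.
apply: leq_trans (mxrankM_maxr _ _) _.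
apply: leq_trans (mxrankM_maxl _ _) _.
exact: rank_leq_col.
Qed.

Lemma cnt_split (s : seq nat) x :
  count (fun y => (y <= x)%N) s = (count (fun y => (y < x)%N) s + count_mem x s)%N.
Proof.
elim: s => //= y s ->; case: (ltngtP y x) => h /=; rewrite ?h; try lia.
Qed.

Lemma perm_counts (s1 s2 : seq nat) :
  (forall x, count (fun y => (y <= x)%N) s1 = count (fun y => (y <= x)%N) s2) ->
  perm_eq s1 s2.
Proof.
move=> H; rewrite /perm_eq; apply/allP => x _ /=; apply/eqP.
have h : count (fun y => (y < x)%N) s1 = count (fun y => (y < x)%N) s2.
  case: x => [|x].
    by rewrite !(eq_count (a2 := pred0)) ?count_pred0 // => y; rewrite ltn0.
  by rewrite !(eq_count (a2 := fun y => (y <= x)%N)) //.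
by apply/eqP; rewrite -(eqn_add2l (count (fun y => (y < x)%N) s1)) -cnt_split h -cnt_split H.
Qed.

Lemma cnt_card l (f : 'I_l -> nat) x :
  count (fun y => (y <= x)%N) [seq f j | j <- enum 'I_l] = #|[pred c | (f c <= x)%N]|.
Proof. by rewrite count_map cardE enumT /enum_mem size_filter; apply: eq_count. Qed.

Lemma min_unique k l1 l2 (V : 'cV[K]_k -> Prop) (H1 : 'M[P]_(k,l1)) (H2 : 'M[P]_(k,l2)) :
  minimal_basis V H1 -> minimal_basis V H2 -> perm_eq (col_degs H1) (col_degs H2).
Proof.
move=> m1 m2; apply: perm_counts => x; rewrite /col_degs !cnt_card.
by apply/eqP; rewrite eqn_leq !(count_le x m1 m2, count_le x m2 m1).
Qed.
End L5.

Section L6.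
Variable F : fieldType.
Local Notation P := {poly F}.
Local Notation K := {fraction P}.
Local Notation tf := (@FracField.tofrac P).

Lemma vdeg_colmx n m (x1 : 'cV[P]_n) (x2 : 'cV[P]_m) :
  vdeg (col_mx x1 x2) = maxn (vdeg x1) (vdeg x2).
Proof.
rewrite /vdeg big_split_ord /=.
by congr maxn; apply: eq_bigr => i _; rewrite ?col_mxEu ?col_mxEd.
Qed.

Lemma proper_opp n m (X : 'M[K]_(n,m)) : proper_mx X -> proper_mx (- X).
Proof.
move=> pX i j; have [a [b [b0 [e s]]]] := pX i j.
exists (- a), b; split=> //; split; last by rewrite size_polyN.
by rewrite mxE e /tofracP tofracN mulNr.
Qed.

Lemma degs_eq n m l (X : 'M[K]_(n,m)) (H1 : 'M[P]_(n,l)) (H2 : 'M[P]_(m,l)) :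
  proper_mx X -> toK H1 = - (X *m toK H2) ->
  forall c, vdeg (col c (col_mx H1 H2)) = vdeg (col c H2).
Proof.
move=> pX e c; rewrite col_col_mx vdeg_colmx; apply/maxn_idPr.
apply: (proper_col (proper_opp pX)).
by rewrite toK_col e !colE toKM toK_delta !mulNmx mulmxA.
Qed.

Lemma order_eq n m l (X : 'M[K]_(n,m)) (H1 : 'M[P]_(n,l)) (H2 : 'M[P]_(m,l)) :
  proper_mx X -> toK H1 = - (X *m toK H2) ->
  order_basis (col_mx H1 H2) = order_basis H2.
Proof. by move=> pX e; apply: eq_bigr => c _; rewrite (degs_eq pX e). Qed.

Lemma degs_list n m l (X : 'M[K]_(n,m)) (H1 : 'M[P]_(n,l)) (H2 : 'M[P]_(m,l)) :
  proper_mx X -> toK H1 = - (X *m toK H2) ->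
  col_degs (col_mx H1 H2) = col_degs H2.
Proof. by move=> pX e; apply: eq_map => c; rewrite (degs_eq pX e). Qed.

Lemma span_zero k l r (G : 'M[K]_(r,k)) (H : 'M[P]_(k,l)) :
  poly_basis (null_r G) H -> G *m toK H = 0.
Proof.
move=> [_ sp]; apply/matrixP => i c.
have := proj2 (sp (toK H *m delta_mx c 0)) (ex_intro _ _ erefl).
rewrite /null_r mulmxA -colE => /matrixP /(_ i 0).
by rewrite !mxE.
Qed.

Section Sys.
Variables (n m p : nat) (A : 'M[P]_n) (B : 'M[P]_(n,m)) (C : 'M[P]_(p,n)) (D : 'M[P]_(p,m)).
Hypothesis dA : \det A != 0.
Local Notation AK := (toK A).
Local Notation X := (invmx (toK A) *m toK B).
Local Notation G := (toK D + toK C *m invmx (toK A) *m toK B).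
Local Notation PK := (toK (sys_mx A B C D)).

Lemma AKu : AK \in unitmx.
Proof. by rewrite unitmxE toKE det_map_mx unitfE tf_eq0. Qed.

Lemma charP k (x1 : 'M[K]_(n,k)) (x2 : 'M[K]_(m,k)) :
  PK *m col_mx x1 x2 = 0 <-> x1 = - (X *m x2) /\ G *m x2 = 0.
Proof.
rewrite /sys_mx toK_block toKN mul_block_col; split.
  move/eqP; rewrite col_mx_eq0 => /andP [/eqP h1 /eqP h2].
  have e1 : x1 = - (X *m x2).
    rewrite -(mulKmx AKu x1).
    have -> : AK *m x1 = - (toK B *m x2) by apply/eqP; rewrite -addr_eq0 h1.
    by rewrite mulmxN mulmxA.
  split=> //; move: h2; rewrite e1 mulmxN mulNmx opprK mulmxDl !mulmxA.
  by rewrite addrC.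
move=> [e1 e2]; apply/eqP; rewrite col_mx_eq0; apply/andP; split; apply/eqP.
  by rewrite e1 mulmxN !mulmxA mulmxV ?AKu // mul1mx addNr.
by rewrite e1 mulmxN mulNmx opprK -e2 mulmxDl !mulmxA addrC.
Qed.

Lemma rank_colmx k l (Y : 'M[K]_(k,m)) (M : 'M[K]_(m,l)) :
  \rank (col_mx Y 1%:M *m M) = \rank M.
Proof.
have e : row_mx 0 1%:M *m (col_mx Y 1%:M *m M) = M :> 'M_(m,l).
  by rewrite mulmxA mul_row_col mul0mx add0r !mul1mx.
apply/eqP; rewrite eqn_leq mxrankM_maxr /= -{1}e.
exact: mxrankM_maxr.
Qed.

Lemma equivB l (H1 : 'M[P]_(n,l)) (H2 : 'M[P]_(m,l)) :
  toK H1 = - (X *m toK H2) ->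
  (poly_basis (null_r PK) (col_mx H1 H2) <-> poly_basis (null_r G) H2).
Proof.
move=> e.
have tH : toK (col_mx H1 H2) = col_mx (- X) 1%:M *m toK H2.
  by rewrite toK_col_mx mul_col_mx mul1mx e mulNmx.
rewrite /poly_basis tH rank_colmx; split=> [[rk sp]|[rk sp]]; split=> // x.
- rewrite /null_r; split=> [hx|[y ->]].
    have : null_r PK (col_mx (- (X *m x)) x).
      by rewrite /null_r charP.
    move/sp => [y]; rewrite !mul_col_mx !mul1mx => /eq_col_mx [_ ->].
    by exists y.
  have : null_r PK (col_mx (- X) 1%:M *m (toK H2 *m y)).
    by rewrite mulmxA; apply/sp; exists y.
  by rewrite /null_r mul_col_mx mul1mx => /charP [].
- rewrite /null_r -[x]vsubmxK charP; split=> [[e1 e2]|[y]].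
    have [y ey] : exists y, dsubmx x = toK H2 *m y by apply/sp.
    by exists y; rewrite e1 ey !mul_col_mx !mul1mx !mulNmx !mulmxA.
  rewrite !mul_col_mx !mul1mx => /eq_col_mx [-> ->].
  split; first by rewrite !mulNmx !mulmxA.
  by apply/sp; exists y.
Qed.

Lemma partA l (H : 'M[P]_(n + m, l)) :
  right_coprime A C -> proper_mx X ->
  right_minimal_basis PK H ->
  right_minimal_basis G (dsubmx H) /\ toK (usubmx H) = - (X *m toK (dsubmx H)).
Proof.
move=> rc pX [pb mn].
have z : PK *m toK H = 0 := span_zero pb.
move: z; rewrite -[H]vsubmxK toK_col_mx charP vsubmxK => [[e1 e2]].
split; last exact: e1.
have pb2 : poly_basis (null_r G) (dsubmx H) by apply/(equivB e1); rewrite vsubmxK.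
split=> // l' K' pK'.
have GK : G *m toK K' = 0 := span_zero pK'.
have [K1 eK1] := coprime_poly rc dA GK.
have := mn _ _ (proj2 (equivB eK1) pK').
by rewrite -{1}(vsubmxK H) (order_eq pX e1) (order_eq pX eK1).
Qed.
End Sys.
End L6.

Section L7.
Variable F : fieldType.
Local Notation P := {poly F}.
Local Notation K := {fraction P}.

Lemma sameA n m p (A : 'M[P]_n) (B : 'M[P]_(n,m)) (C : 'M[P]_(p,n)) (D : 'M[P]_(p,m)) :
  \det A != 0 -> right_coprime A C -> proper_mx (invmx (toK A) *m toK B) ->
  same_right_min_indices (toK (sys_mx A B C D)) (toK D + toK C *m invmx (toK A) *m toK B).
Proof.
move=> dA rc pX l1 l2 M1 M2 m1 m2.
have [m1' e1] := partA dA rc pX m1.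
rewrite -(vsubmxK M1) (degs_list pX e1).
exact: min_unique m1' m2.
Qed.

Lemma nullT k r (G : 'M[K]_(k,r)) x : null_l G x <-> null_r G^T x.
Proof.
rewrite /null_l /null_r; split=> h.
  by rewrite -(trmxK x) -trmx_mul h trmx0.
by rewrite -(trmxK (x^T *m G)) trmx_mul trmxK h trmx0.
Qed.

Lemma mb_ext k (V V' : 'cV[K]_k -> Prop) l (H : 'M[P]_(k,l)) :
  (forall x, V x <-> V' x) -> minimal_basis V H -> minimal_basis V' H.
Proof.
move=> e [[rk sp] mn]; split.
  by split=> // x; rewrite -e.
move=> l' H' [rk' sp']; apply: mn; split=> // x; rewrite e; exact: sp'.
Qed.

Lemma leftT k r (G : 'M[K]_(k,r)) l (H : 'M[P]_(k,l)) :
  left_minimal_basis G H <-> right_minimal_basis G^T H.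
Proof.
split; apply: mb_ext => x; [exact: nullT | exact: iff_sym (nullT _ _)].
Qed.

Lemma proper_tr n m (X : 'M[K]_(n,m)) : proper_mx X -> proper_mx X^T.
Proof. by move=> pX i j; rewrite mxE. Qed.
End L7.

Unset Implicit Arguments.
Theorem theorem3p6 (F : fieldType) (n m p : nat)
  (A : 'M[{poly F}]_n) (B : 'M[{poly F}]_(n, m))
  (C : 'M[{poly F}]_(p, n)) (D : 'M[{poly F}]_(p, m))
  (G : 'M[{fraction {poly F}}]_(p, m)) :
  is_system_matrix_of A B C D G ->
  (* (a) *)
  (right_coprime A C -> proper_mx (invmx (toK A) *m toK B) ->
   forall (l : nat) (H : 'M[{poly F}]_(n + m, l)),
     right_minimal_basis (toK (sys_mx A B C D)) H ->
     right_minimal_basis G (dsubmx H) /\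
     toK (usubmx H) = - (invmx (toK A) *m toK B *m toK (dsubmx H)) /\
     same_right_min_indices (toK (sys_mx A B C D)) G)
  /\
  (* (b) *)
  (left_coprime A B -> proper_mx (toK C *m invmx (toK A)) ->
   forall (q : nat) (H : 'M[{poly F}]_(n + p, q)),
     left_minimal_basis (toK (sys_mx A B C D)) H ->
     left_minimal_basis G (dsubmx H) /\
     toK (usubmx H) = (toK C *m invmx (toK A))^T *m toK (dsubmx H) /\
     same_left_min_indices (toK (sys_mx A B C D)) G).
Proof.
move=> [dA ->]; split.
  move=> rc pX l H mb; have [h1 h2] := partA dA rc pX mb.
  by split=> //; split=> //; exact: sameA.
move=> lc pY q H mb.
have dA' : \det A^T != 0 by rewrite det_tr.
have rc' : right_coprime A^T (- B^T).
  move=> R A' C' eA eC; apply: (lc R A' (- C') eA).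
  by rewrite mulNmx -eC opprK.
have eX : invmx (toK A^T) *m toK (- C^T) = - (toK C *m invmx (toK A))^T.
  by rewrite toKN !toKtr -trmx_inv mulmxN trmx_mul.
have pX' : proper_mx (invmx (toK A^T) *m toK (- C^T)).
  by rewrite eX; apply/proper_opp/proper_tr.
have eP : toK (sys_mx A^T (- C^T) (- B^T) D^T) = (toK (sys_mx A B C D))^T.
  by rewrite -toKtr /sys_mx tr_block_mx opprK linearN.
have eG : toK D^T + toK (- B^T) *m invmx (toK A^T) *m toK (- C^T) =
    (toK D + toK C *m invmx (toK A) *m toK B)^T.
  rewrite -mulmxA eX !toKN !toKtr mulNmx mulmxN opprK linearD /= !trmx_mul.
  by rewrite mulmxA.
have mb' : right_minimal_basis (toK (sys_mx A^T (- C^T) (- B^T) D^T)) H.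
  by rewrite eP; apply/leftT.
have [h1 h2] := partA dA' rc' pX' mb'.
split; first by apply/leftT; rewrite -eG.
split; first by rewrite h2 eX mulNmx opprK.
move=> l1 l2 M1 M2 m1 m2.
apply: (sameA (D := D^T) dA' rc' pX'); rewrite ?eP ?eG; exact/leftT.
Qed.
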